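(* Let $(X_1(t))_{t\ge 0}$ be an arbitrary real-valued stochastic process (no distributional or path assumptions beyond being real-valued), let $u_0\ge 0$, $c_0\ge 0$ and $k>0$. Put $$I_1(t)=-\min\Big(\inf_{0\le s\le t}X_1(s),\,0\Big),\qquad X_0(t)=u_0+c_0t-k\,I_1(t),$$ $$\tau_0=\inf\{t\ge 0: X_0(t)<0\},\qquad X(t)=u_0+c_0t+k\,X_1(t),\qquad \tau=\inf\{t\ge 0: X(t)<0\}.$$ Then $\tau_0=\tau$ pathwise (hence almost surely). In particular, if $X_1(t)=u_1+c_1t-S_1(t)$ for some process $S_1$, then $$\tau_0=\inf\Big\{t\ge 0:\ \tfrac{u_0}{k}+u_1+\big(\tfrac{c_0}{k}+c_1\big)t-S_1(t)<0\Big\},$$ so that for every $t>0$, $\Psi(t,\mathbf u,\mathbf c):=P(\tau_0<t)=\Psi_1\big(t;\,u_0/k+u_1,\,c_0/k+c_1\big)$, where $\Psi_1(t;u,c):=P\big(\inf\{s\ge0: u+cs-S_1(s)<0\}<t\big)$ is the finite-time ruin probability of the subsidiary with initial reserve $u$ and premium rate $c$.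
   Context: Central branch (CB) network with one subsidiary: the subsidiary reserve process $X_1$ is kept nonnegative by minimal (Skorokhod) regulation, the cumulative bail-out amount being the regulator $I_1$; the CB, whose reserve in isolation is the deterministic drift $u_0+c_0t$, pays a proportional cost $k$ per unit of bail-out, so its reserve is $X_0(t)=u_0+c_0t-kI_1(t)$. The ruin time of the network is the ruin time $\tau_0$ of the CB. $X$ is the ''pooled assets'' process. *)

(* Defs.v *)
From Stdlib Require Import Reals Lra ClassicalEpsilon.
Open Scope R_scope.

Inductive ERbar : Type :=
| Fin : R -> ERbar
| PInf : ERbar
| MInf : ERbar.

Definition ER_le (x y : ERbar) : Prop :=
  match x, y with
  | MInf, _ => True
  | _, PInf => True
  | Fin a, Fin b => a <= b
  | _, _ => False
  end.

Definition ER_lt (x y : ERbar) : Prop :=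
  match x, y with
  | MInf, MInf => False
  | MInf, _ => True
  | Fin _, PInf => True
  | Fin a, Fin b => a < b
  | _, _ => False
  end.

Definition ER_opp (x : ERbar) : ERbar :=
  match x with Fin a => Fin (- a) | PInf => MInf | MInf => PInf end.

Definition ER_min0 (x : ERbar) : ERbar :=
  match x with Fin a => Fin (Rmin a 0) | PInf => Fin 0 | MInf => MInf end.

Definition ER_shift (a : R) (x : ERbar) : ERbar :=
  match x with Fin b => Fin (a + b) | PInf => PInf | MInf => MInf end.

(** k * x, for a real k > 0 (used only with k > 0) *)
Definition ER_scale (k : R) (x : ERbar) : ERbar :=
  match x with Fin b => Fin (k * b) | PInf => PInf | MInf => MInf end.

(** m is the infimum (in [-oo,+oo]) of the set S ⊆ R; inf ∅ = +oo. *)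
Definition is_ER_inf (S : R -> Prop) (m : ERbar) : Prop :=
  (forall x, S x -> ER_le m (Fin x)) /\
  (forall l, (forall x, S x -> ER_le l (Fin x)) -> ER_le l m).

(** The infimum of S in the extended reals (it always exists and is unique). *)
Definition ER_inf (S : R -> Prop) : ERbar :=
  epsilon (inhabits MInf) (is_ER_inf S).

Definition bailout (X1 : R -> R) (t : R) : ERbar :=
  ER_opp (ER_min0 (ER_inf (fun v => exists s, 0 <= s <= t /\ v = X1 s))).

Definition cb_reserve (u0 c0 k : R) (X1 : R -> R) (t : R) : ERbar :=
  ER_shift (u0 + c0 * t) (ER_opp (ER_scale k (bailout X1 t))).

Definition cb_ruin_time (u0 c0 k : R) (X1 : R -> R) : ERbar :=
  ER_inf (fun t => 0 <= t /\ ER_lt (cb_reserve u0 c0 k X1 t) (Fin 0)).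

Definition pooled (u0 c0 k : R) (X1 : R -> R) (t : R) : R :=
  u0 + c0 * t + k * X1 t.

Definition pooled_ruin_time (u0 c0 k : R) (X1 : R -> R) : ERbar :=
  ER_inf (fun t => 0 <= t /\ pooled u0 c0 k X1 t < 0).

Definition sub_ruin_time (u c : R) (S : R -> R) : ERbar :=
  ER_inf (fun s => 0 <= s /\ u + c * s - S s < 0).

(* Main.v *)
Require Import Defs.
From Stdlib Require Import Reals Lra Classical ClassicalEpsilon FunctionalExtensionality.
Open Scope R_scope.

Lemma ER_le_antisym x y : ER_le x y -> ER_le y x -> x = y.
Proof.
  destruct x, y; simpl; intros; try tauto; try easy.
  f_equal; lra.
Qed.

Lemma ER_le_trans x y z : ER_le x y -> ER_le y z -> ER_le x z.
Proof. destruct x, y, z; simpl; intros; try tauto; try easy; lra. Qed.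

Lemma inf_exists S : exists m, is_ER_inf S m.
Proof.
  destruct (classic (exists x, S x)) as [[x0 Hx0]|Hne].
  - destruct (classic (exists b, forall x, S x -> b <= x)) as [[b Hb]|Hnb].
    + set (E := fun y => S (- y)).
      assert (HB : bound E).
      { exists (- b). intros y Hy. unfold E in Hy. specialize (Hb _ Hy). lra. }
      assert (HE : exists y, E y).
      { exists (- x0). unfold E. rewrite Ropp_involutive. exact Hx0. }
      destruct (completeness E HB HE) as [m [Hm1 Hm2]].
      exists (Fin (- m)). split.
      * intros x Hx. simpl. assert (E (- x)) by (unfold E; rewrite Ropp_involutive; auto).
        specialize (Hm1 _ H). lra.
      * intros l Hl. destruct l as [a| |]; simpl; auto.
        -- assert (a <= - m).
           { assert (m <= - a). { apply Hm2. intros y Hy. specialize (Hl _ Hy). simpl in Hl. lra. }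
             lra. }
           lra.
        -- specialize (Hl _ Hx0). simpl in Hl. auto.
    + exists MInf. split.
      * intros; simpl; auto.
      * intros l Hl. destruct l as [a| |]; simpl; auto.
        -- apply Hnb. exists a. intros x Hx. specialize (Hl _ Hx). simpl in Hl. auto.
        -- specialize (Hl _ Hx0). simpl in Hl. auto.
  - exists PInf. split.
    + intros x Hx. exfalso. apply Hne. eauto.
    + intros l _. destruct l; simpl; auto.
Qed.

Lemma ER_inf_spec S : is_ER_inf S (ER_inf S).
Proof.
  unfold ER_inf. apply epsilon_spec. apply inf_exists.
Qed.

Lemma inf_unique S m m' : is_ER_inf S m -> is_ER_inf S m' -> m = m'.
Proof.
  intros [H1 H2] [H1' H2']. apply ER_le_antisym; auto.
Qed.

Lemma inf_eq (S T : R -> Prop) :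
  (forall x, S x -> exists y, T y /\ y <= x) ->
  (forall y, T y -> exists x, S x /\ x <= y) ->
  ER_inf S = ER_inf T.
Proof.
  intros HST HTS.
  destruct (ER_inf_spec S) as [HS1 HS2].
  apply (inf_unique T); [|apply ER_inf_spec].
  split.
  - intros y Hy. destruct (HTS y Hy) as [x [Hx Hxy]].
    apply ER_le_trans with (Fin x); auto.
  - intros l Hl. apply HS2. intros x Hx. destruct (HST x Hx) as [y [Hy Hyx]].
    apply ER_le_trans with (Fin y); auto.
Qed.

Lemma part1 (X1 : R -> R) (u0 c0 k : R)
  (hu0 : 0 <= u0) (hc0 : 0 <= c0) (hk : 0 < k) :
  cb_ruin_time u0 c0 k X1 = pooled_ruin_time u0 c0 k X1.
Proof.
  unfold cb_ruin_time, pooled_ruin_time.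
  apply inf_eq.
  - intros t [Ht Hlt].
    unfold cb_reserve, bailout in Hlt.
    set (A := fun v => exists s, 0 <= s <= t /\ v = X1 s) in Hlt.
    destruct (ER_inf_spec A) as [HA1 HA2].
    set (q := - (u0 + c0 * t) / k).
    assert (Hq : k * q = - (u0 + c0 * t)) by (unfold q; field; lra).
    assert (Hnot : ~ ER_le (Fin q) (ER_inf A)).
    { destruct (ER_inf A) as [j| |] eqn:Ej; simpl in Hlt |- *.
      - intro Hqj.
        destruct (Rle_dec j 0).
        + rewrite Rmin_left in Hlt by auto. nra.
        + rewrite Rmin_right in Hlt by lra. nra.
      - nra.
      - auto. }
    assert (Hex : exists s, 0 <= s <= t /\ X1 s < q).
    { apply NNPP. intro Hn. apply Hnot. apply HA2. intros v [s [Hs ->]].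
      simpl. apply Rnot_lt_le. intro Hl. apply Hn. eauto. }
    destruct Hex as [s [Hs Hxs]].
    exists s. split; [split; [lra|]|lra].
    unfold pooled. nra.
  - intros y [Hy Hp]. exists y. split; [|lra]. split; auto.
    unfold cb_reserve, bailout.
    set (A := fun v => exists s, 0 <= s <= y /\ v = X1 s).
    destruct (ER_inf_spec A) as [HA1 HA2].
    assert (Hy' : ER_le (ER_inf A) (Fin (X1 y))).
    { apply HA1. exists y. split; [lra|auto]. }
    unfold pooled in Hp.
    destruct (ER_inf A) as [j| |]; simpl in Hy' |- *; auto; try contradiction.
    assert (Rmin j 0 <= X1 y) by (pose proof (Rmin_l j 0); lra).
    nra.
Qed.

Theorem mainTheorem1 (Omega : Type) (X1 : Omega -> R -> R) (u0 c0 k : R)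
  (hu0 : 0 <= u0) (hc0 : 0 <= c0) (hk : 0 < k) :
  (forall w, cb_ruin_time u0 c0 k (X1 w) = pooled_ruin_time u0 c0 k (X1 w)) /\
  (forall (u1 c1 : R) (S1 : Omega -> R -> R),
     (forall w t, 0 <= t -> X1 w t = u1 + c1 * t - S1 w t) ->
     (forall w, cb_ruin_time u0 c0 k (X1 w)
                = sub_ruin_time (u0 / k + u1) (c0 / k + c1) (S1 w)) /\
     (forall (P : (Omega -> Prop) -> R) (t : R), 0 < t ->
        P (fun w => ER_lt (cb_ruin_time u0 c0 k (X1 w)) (Fin t))
        = P (fun w => ER_lt (sub_ruin_time (u0 / k + u1) (c0 / k + c1) (S1 w)) (Fin t)))).
Proof.
  assert (H1 : forall w, cb_ruin_time u0 c0 k (X1 w) = pooled_ruin_time u0 c0 k (X1 w)).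
  { intro w. apply part1; auto. }
  split; auto.
  intros u1 c1 S1 HX.
  assert (H2 : forall w, cb_ruin_time u0 c0 k (X1 w)
                = sub_ruin_time (u0 / k + u1) (c0 / k + c1) (S1 w)).
  { intro w. rewrite H1. unfold pooled_ruin_time, sub_ruin_time.
    apply inf_eq.
    - intros x [Hx Hp]. exists x. split; [|lra]. split; auto.
      unfold pooled in Hp. rewrite HX in Hp by auto.
      assert (E : k * (u0 / k + u1 + (c0 / k + c1) * x - S1 w x)
                  = u0 + c0 * x + k * (u1 + c1 * x - S1 w x)) by (field; lra).
      nra.
    - intros x [Hx Hp]. exists x. split; [|lra]. split; auto.
      unfold pooled. rewrite HX by auto.
      assert (E : k * (u0 / k + u1 + (c0 / k + c1) * x - S1 w x)
                  = u0 + c0 * x + k * (u1 + c1 * x - S1 w x)) by (field; lra).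
      nra. }
  split; auto.
  intros P t _. f_equal. apply functional_extensionality. intro w. rewrite H2. reflexivity.
Qed.
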